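(* Let $q$ be a prime power, let $k\ge 2$ and $1\le r\le k-1$ be integers, and let $\varepsilon_r,\dots,\varepsilon_{k-2}$ be integers with $0\le\varepsilon_i\le q-1$. Let $\mathcal{F}$ be a multiset of points in $\mathrm{PG}(k-1,q)$ with parameters \[ \Bigl(\sum_{i=r}^{k-2}\varepsilon_i v_{i+1},\ \sum_{i=r}^{k-2}\varepsilon_i v_{i+1-r}\Bigr)^{(k-1-r)} \] (as a minihyper), and let $w_0$ be the maximal multiplicity of a point in $\mathcal{F}$. Then for every integer $\sigma\ge w_0$ the multiset $\mathcal{K}=\sigma-\mathcal{F}$ (i.e. $\mathcal{K}(P)=\sigma-\mathcal{F}(P)$ for every point $P$) is an arc with parameters \[ \Bigl(n=\sigma v_k-\sum_{i=r}^{k-2}\varepsilon_i v_{i+1},\ \ w_{k-r-1}=\sigma v_{k-r}-\sum_{i=r}^{k-2}\varepsilon_i v_{i+1-r}\Bigr)^{(k-1-r)}, \] and the linear code $C$ associated with $\mathcal{K}$ is a Griesmer code with respect to the $r$th generalized Hamming weight, i.e. $n=g_q^{(r)}(k,d_r(C))$.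
   Context: $v_j=(q^j-1)/(q-1)$. Dimensions in $\mathrm{PG}(k-1,q)$ are projective (points have dimension 0, hyperplanes dimension $k-2$, the whole space dimension $k-1$). A multiset of points is a map $\mathcal{K}$ from the point set of $\mathrm{PG}(k-1,q)$ to $\mathbb{Z}_{\ge0}$; for a set $S$ of points, $\mathcal{K}(S)=\sum_{P\in S}\mathcal{K}(P)$. A multiset has minihyper parameters $(n,u)^{(j)}$ if its total multiplicity is $n$, every $j$-dimensional subspace has multiplicity at least $u$, and some $j$-dimensional subspace has multiplicity exactly $u$; it has arc parameters $(n,w)^{(j)}$ if its total multiplicity is $n$, every $j$-dimensional subspace has multiplicity at most $w$, and some has multiplicity exactly $w$. The code associated with a multiset $\mathcal{K}$ of total multiplicity $n$ is the row space of a $k\times n$ matrix over $\mathbb{F}_q$ whose columns are coordinate vectors of the points of $\mathcal{K}$, each point $P$ appearing $\mathcal{K}(P)$ times. For a linear code $C\le\mathbb{F}_q^n$, the support of a subcode $C'$ is the set of coordinates where some codeword of $C'$ is nonzero, and the $r$th generalized Hamming weight $d_r(C)$ is the minimum support size of an $r$-dimensional subcode. For integers $k$, $1\le r\le k$ and $d$, $g_q^{(r)}(k,d)=d+\sum_{i=1}^{k-r}\lceil d/(q^i v_r)\rceil$. *)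

(* Defs.v *)
From HB Require Import structures.
From mathcomp Require Import all_boot all_order all_algebra.
Set Implicit Arguments. Unset Strict Implicit. Unset Printing Implicit Defensive.
Import GRing.Theory.
Local Open Scope ring_scope.

Section Proj.
Variable F : finFieldType.
Variable k : nat.

(* A point of PG(k-1,q): a 1-dimensional subspace of F^k, represented by its
   canonical row-space matrix <<A>>%MS. *)
Definition is_point (A : 'M[F]_k) : bool := (\rank A == 1)%N && (<<A>>%MS == A).
Definition point := {A : 'M[F]_k | is_point A}.

Definition mult (K : point -> nat) (S : 'M[F]_k) : nat :=
  (\sum_(P : point | (val P <= S)%MS) K P)%N.

Definition total (K : point -> nat) : nat := (\sum_(P : point) K P)%N.

(* j-dimensional projective subspaces = (j+1)-dimensional vector subspaces. *)
Definition proj_subspace (j : nat) (S : 'M[F]_k) : bool := \rank S == j.+1.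

Definition minihyper_params (K : point -> nat) (n u j : nat) : Prop :=
  [/\ total K = n,
      (forall S, proj_subspace j S -> u <= mult K S)%N &
      exists2 S, proj_subspace j S & mult K S = u].

Definition arc_params (K : point -> nat) (n w j : nat) : Prop :=
  [/\ total K = n,
      (forall S, proj_subspace j S -> mult K S <= w)%N &
      exists2 S, proj_subspace j S & mult K S = w].

Definition assoc_gen_matrix (K : point -> nat) (N : nat) (G : 'M[F]_(k, N)) : Prop :=
  (forall j : 'I_N, col j G != 0) /\
  (forall P : point, #|[set j : 'I_N | (((col j G)^T) == val P)%MS]| = K P).
End Proj.

Section Code.
Variable F : finFieldType.
Variables (k N : nat).

Definition support (D : 'M[F]_N) : {set 'I_N} :=
  [set j : 'I_N | [exists v : 'rV[F]_N, (v <= D)%MS && (v 0 j != 0)]].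

(* r-th generalized Hamming weight of the code = row space of G: minimum support
   size of an r-dimensional subcode (default N if there is none). *)
Definition ghw (G : 'M[F]_(k, N)) (r : nat) : nat :=
  \big[minn/N]_(D : 'M[F]_N | (D <= G)%MS && (\rank D == r)) #|support D|.
End Code.

Definition vq (q j : nat) : nat := ((q ^ j - 1) %/ (q - 1))%N.

Definition ceil_div (a b : nat) : nat := ((a + b - 1) %/ b)%N.

Definition griesmer_r (q r k d : nat) : nat :=
  (d + \sum_(1 <= i < (k - r).+1) ceil_div d (q ^ i * vq q r))%N.

(* Main.v *)
Require Import Defs.
From HB Require Import structures.
From mathcomp Require Import all_boot all_order all_algebra.
From mathcomp Require Import zify.
Set Implicit Arguments. Unset Strict Implicit. Unset Printing Implicit Defensive.

Definition Vs (q j : nat) : nat := (\sum_(i < j) q ^ i)%N.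

Lemma VsS q j : Vs q j.+1 = (Vs q j + q ^ j)%N.
Proof. by rewrite /Vs big_ord_recr. Qed.

Lemma Vs0 q : Vs q 0 = 0%N.
Proof. by rewrite /Vs big_ord0. Qed.

Lemma VsD q a b : Vs q (a + b) = (Vs q a + q ^ a * Vs q b)%N.
Proof.
elim: b => [|b IH]; first by rewrite addn0 Vs0 muln0 addn0.
by rewrite addnS !VsS IH mulnDr -expnD addnA.
Qed.

Lemma vqE q j : (1 < q)%N -> vq q j = Vs q j.
Proof.
move=> q1; rewrite /vq subn1 predn_exp /Vs subn1 mulKn //.
by case: q q1.
Qed.

Lemma Vs_ge q j : (0 < q)%N -> (j <= Vs q j)%N.
Proof.
move=> q0; elim: j => [|j IH]; first by rewrite Vs0.
rewrite VsS; have := expn_gt0 q j; rewrite q0 /=; lia.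
Qed.

Lemma predVs q j : (0 < q)%N -> (q.-1 * Vs q j = (q ^ j).-1)%N.
Proof. by move=> _; rewrite predn_exp. Qed.

Lemma ceil_geP a b x : (0 < b)%N -> (x <= ceil_div a b)%N = (x * b < a + b)%N.
Proof.
move=> b0; rewrite /ceil_div leq_divRL //.
apply/idP/idP; lia.
Qed.

Lemma ceil_leP a b x : (0 < b)%N -> (ceil_div a b <= x)%N = (a <= x * b)%N.
Proof.
move=> b0; apply/idP/idP => H.
  have : ~~ (x.+1 <= ceil_div a b)%N by rewrite -ltnNge ltnS.
  rewrite ceil_geP // mulSn; lia.
rewrite leqNgt; apply/negP => H2.
move: H2; rewrite -/(x.+1 <= ceil_div a b)%N ceil_geP // mulSn; lia.
Qed.

Lemma ceil_nested a b c : (0 < b)%N -> (0 < c)%N ->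
  ceil_div (ceil_div a b) c = ceil_div a (b * c).
Proof.
move=> b0 c0; have bc0 : (0 < b * c)%N by rewrite muln_gt0 b0.
set y := ceil_div (ceil_div a b) c; set x := ceil_div a (b * c).
have Hy : (ceil_div a b <= y * c)%N by rewrite -ceil_leP.
have Hx : (a <= x * (b * c))%N by rewrite -ceil_leP.
have Hab : (a <= ceil_div a b * b)%N by rewrite -ceil_leP.
apply/eqP; rewrite eqn_leq; apply/andP; split.
  rewrite ceil_leP // ceil_leP //; by rewrite -mulnA (mulnC c).
rewrite ceil_leP //; apply: (leq_trans Hab); rewrite (mulnC b) mulnA leq_mul2r; by rewrite Hy orbT.
Qed.

Lemma ceil_mono a a' b : (a <= a')%N -> (ceil_div a b <= ceil_div a' b)%N.
Proof. by move=> H; rewrite /ceil_div leq_div2r // leq_sub2r // leq_add2r. Qed.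

Lemma ceil_div0 b : (0 < b)%N -> ceil_div 0 b = 0%N.
Proof. by move=> b0; apply/eqP; rewrite -leqn0 ceil_leP. Qed.

Lemma ceil_div1 a : ceil_div a 1 = a.
Proof. by rewrite /ceil_div addnK divn1. Qed.

Lemma ceil_exact v Q X X0 R : (0 < v)%N -> (Q * X = X0 + R)%N -> (R < Q)%N ->
  ceil_div (v * X0) (Q * v) = X.
Proof.
move=> v0 E RQ; have Q0 : (0 < Q)%N by lia.
have Qv : (0 < Q * v)%N by rewrite muln_gt0 Q0.
apply/eqP; rewrite eqn_leq; apply/andP; split.
  rewrite ceil_leP // mulnA (mulnC X) E mulnC; apply: leq_mul => //; lia.
rewrite ceil_geP // mulnA (mulnC X) E mulnDl (mulnC X0).
rewrite ltn_add2l; by rewrite ltn_mul2r v0.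
Qed.

Lemma leq_sum_nat a b (F G : nat -> nat) :
  (forall i, (a <= i < b)%N -> true -> (F i <= G i)%N) ->
  (\sum_(a <= i < b) F i <= \sum_(a <= i < b) G i)%N.
Proof.
move=> H; rewrite big_nat_cond [X in (_ <= X)%N]big_nat_cond.
by apply: leq_sum => i /andP [Hi _]; apply: H.
Qed.

Section Arith.
Variables (q r m s : nat) (e : nat -> nat).
Hypothesis q2 : (1 < q)%N.
Hypothesis r1 : (1 <= r)%N.
Hypothesis m1 : (1 <= m)%N.
Hypothesis s1 : (1 <= s)%N.
Hypothesis e0 : e 0 = 0%N.
Hypothesis eb : forall i, (i < m)%N -> (e i <= q - 1)%N.

Definition Rr j := (\sum_(i < j) e i * q ^ i)%N.
Definition Yy j := (\sum_(j <= i < m) e i * q ^ (i - j))%N.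
Definition X0 := (s * q ^ m - Rr m)%N.
Definition Xx j := (s * q ^ (m - j) - Yy j)%N.
Definition AA := (\sum_(i < m) e i * Vs q (i + r))%N.
Definition BB := (\sum_(i < m) e i * Vs q i)%N.
Definition nn := (s * Vs q (m + r) - AA)%N.
Definition ww := (s * Vs q m - BB)%N.

Lemma q0 : (0 < q)%N. Proof. by apply: ltnW. Qed.

Lemma Rr_lt j : (j <= m)%N -> (Rr j < q ^ j)%N.
Proof.
elim: j => [|j IH] jm; first by rewrite /Rr big_ord0 expn0.
rewrite /Rr big_ord_recr /= -/(Rr j) expnS.
have H1 := IH (ltnW jm). have H2 := eb jm.
have : (e j * q ^ j <= (q - 1) * q ^ j)%N by rewrite leq_mul2r H2 orbT.
rewrite mulnBl mul1n. move: H1; set a := q ^ j; set b := e j * a.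
have : (q * a = a * q)%N by rewrite mulnC.
have : (a <= q * a)%N by rewrite leq_pmull // q0.
lia.
Qed.

Lemma Rr_Yy j : (j <= m)%N -> (q ^ j * Yy j + Rr j = Rr m)%N.
Proof.
move=> jm; rewrite /Rr -!(big_mkord xpredT (fun i => e i * q ^ i)%N).
rewrite (@big_cat_nat _ _ _ j 0 m) //= addnC; congr (_ + _)%N.
rewrite /Yy big_distrr /=; apply: eq_big_nat => i /andP [ji _].
by rewrite mulnCA -expnD subnKC.
Qed.

Lemma Yy_lt j : (j <= m)%N -> (Yy j < q ^ (m - j))%N.
Proof.
move=> jm; have H := Rr_Yy jm; have H2 := Rr_lt (leqnn m).
have qj : (0 < q ^ j)%N by rewrite expn_gt0 q0.
rewrite -(ltn_pmul2l qj) -expnD subnKC //.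
lia.
Qed.

Lemma Yy_le j : (j <= m)%N -> (Yy j <= s * q ^ (m - j))%N.
Proof.
move=> jm; apply: leq_trans (ltnW (Yy_lt jm)) _.
by rewrite leq_pmull.
Qed.

Lemma Rr_le : (Rr m <= s * q ^ m)%N.
Proof. by apply: leq_trans (ltnW (Rr_lt (leqnn m))) _; rewrite leq_pmull. Qed.

Lemma X0_ge1 : (1 <= X0)%N.
Proof.
rewrite /X0 subn_gt0; apply: leq_trans (Rr_lt (leqnn m)) _.
by rewrite leq_pmull.
Qed.

Lemma Xx_eq j : (j <= m)%N -> (q ^ j * Xx j = X0 + Rr j)%N.
Proof.
move=> jm; rewrite /Xx /X0 mulnBr mulnCA -expnD subnKC //.
have H := Rr_Yy jm; have H2 := Rr_le.
lia.
Qed.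

Lemma sum_rev_pow n : (\sum_(1 <= j < n.+1) q ^ (n - j))%N = Vs q n.
Proof.
elim: n => [|n IH]; first by rewrite big_geq // Vs0.
rewrite big_nat_recl // subn1 /= VsS -IH addnC; congr (_ + _)%N.
Qed.

Lemma sum_Yy_gen n : (\sum_(1 <= j < n.+1) \sum_(j <= i < n) e i * q ^ (i - j))%N
   = (\sum_(i < n) e i * Vs q i)%N.
Proof.
elim: n => [|n IH]; first by rewrite big_geq // big_ord0.
rewrite (@big_nat_recr _ _ _ n.+1 1) //= [X in (_ + X)%N]big_geq // addn0 big_ord_recr /= -IH.
rewrite -sum_rev_pow big_distrr -big_split /=.
apply: eq_big_nat => j /andP [j1 jn].
by rewrite big_nat_recr //.
Qed.

Lemma sum_Yy : (\sum_(1 <= j < m.+1) Yy j)%N = BB.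
Proof. by rewrite /Yy sum_Yy_gen. Qed.

Lemma BB_le : (BB <= s * Vs q m)%N.
Proof.
rewrite -sum_Yy -sum_rev_pow big_distrr; apply: leq_sum_nat => j /andP [j1 jm] _.
by apply: Yy_le.
Qed.

Lemma sum_Xx : (\sum_(1 <= j < m.+1) Xx j)%N = ww.
Proof.
rewrite /Xx sumnB; last first.
  move=> j _; case: (leqP j m) => jm; first by apply: Yy_le.
  by rewrite /Yy big_geq // ltnW.
by rewrite sum_Yy -big_distrr sum_rev_pow.
Qed.

Lemma AA_eq : AA = (BB + Vs q r * Rr m)%N.
Proof.
rewrite /AA /BB /Rr big_distrr -big_split /=; apply: eq_bigr => i _.
by rewrite VsD mulnDr mulnA (mulnC _ (Vs q r)).
Qed.

Lemma nn_eq : nn = (ww + Vs q r * X0)%N.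
Proof.
rewrite /nn /ww /X0 AA_eq (VsD q m r) mulnDr mulnBr.
have H1 := BB_le. have H2 := Rr_le.
have H3 : (Vs q r * Rr m <= Vs q r * (s * q ^ m))%N by rewrite leq_mul2l H2 orbT.
have H4 : (s * (q ^ m * Vs q r) = Vs q r * (s * q ^ m))%N by rewrite mulnA mulnC.
lia.
Qed.

Lemma Vs_pos j : (1 <= j)%N -> (0 < Vs q j)%N.
Proof. by move=> j1; apply: leq_trans j1 (Vs_ge _ q0). Qed.

Lemma ww_lt_nn : (ww < nn)%N.
Proof.
by rewrite nn_eq -addn1 leq_add2l muln_gt0 Vs_pos // X0_ge1.
Qed.

Lemma nn_ww : (nn - ww = Vs q r * X0)%N.
Proof. by rewrite nn_eq addKn. Qed.

Lemma griesmer_eq : griesmer_r q r (m + r) (nn - ww) = nn.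
Proof.
rewrite /griesmer_r nn_ww addnK vqE //.
rewrite [in RHS]nn_eq (addnC ww); congr (_ + _)%N; rewrite -sum_Xx.
apply: eq_big_nat => j /andP [j1 jm].
apply: (@ceil_exact _ _ _ _ (Rr j)); first by apply: Vs_pos.
  by apply: Xx_eq.
by apply: Rr_lt.
Qed.

Lemma griesmer_gt : (2 <= r)%N -> (nn < griesmer_r q r.-1 (m + r).-1 (nn - ww))%N.
Proof.
move=> r2; set r' := r.-1.
have hr : r = r'.+1 by rewrite /r' prednK.
have hm : ((m + r).-1 - r' = m)%N by rewrite /r'; lia.
rewrite /griesmer_r hm vqE // nn_ww.
rewrite [X in (X < _)%N]nn_eq addnC -addnS leq_add2l -sum_Xx.
have Vr : (Vs q r' < Vs q r)%N by rewrite hr VsS -addn1 leq_add2l expn_gt0 q0.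
have Vr0 : (0 < Vs q r')%N by apply: Vs_pos; rewrite /r'; lia.
rewrite big_nat_recl // [in X in (_ <= X)%N]big_nat_recl // -addSn.
apply: leq_add.
  rewrite expn1 ceil_geP; last by rewrite muln_gt0 q0.
  have E := Xx_eq m1; rewrite expn1 in E.
  have R1 : Rr 1 = 0%N by rewrite /Rr big_ord1 e0.
  have E2 : ((Xx 1).+1 * (q * Vs q r') = X0 * Vs q r' + q * Vs q r')%N.
    by rewrite mulSn mulnA (mulnC (Xx 1) q) E R1 addn0 addnC.
  have H : (X0 * Vs q r' < Vs q r * X0)%N by rewrite mulnC ltn_mul2r Vr X0_ge1.
  lia.
apply: (@leq_sum_nat _ _ (fun i => Xx i.+1)) => j /andP [j0 jm] _.
have jm' : (j.+1 <= m)%N by [].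
rewrite ceil_geP; last by rewrite muln_gt0 expn_gt0 q0.
rewrite mulnA (mulnC (Xx j.+1)) Xx_eq // mulnDl.
have H1 := Rr_lt jm'.
have H2 : (Rr j.+1 * Vs q r' < q ^ j.+1 * Vs q r')%N by rewrite ltn_mul2r Vr0.
have H3 : (X0 * Vs q r' <= Vs q r * X0)%N by rewrite mulnC leq_mul2r ltnW // orbT.
lia.
Qed.

End Arith.

Import GRing.Theory.

Section Geo.
Variable F : finFieldType.
Variable k : nat.
Local Notation q := #|F|.
Local Notation pt := (point F k).

Lemma q_gt1 : (1 < q)%N.
Proof. exact: card_finNzRing_gt1. Qed.

Lemma card_subv m (S : 'M[F]_(m, k)) :
  #|[set v : 'rV[F]_k | (v <= S)%MS]| = (q ^ \rank S)%N.
Proof.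
have -> : [set v : 'rV[F]_k | (v <= S)%MS] =
          [set (u *m row_base S)%R | u in [set: 'rV[F]_(\rank S)]].
  apply/setP => v; rewrite inE; apply/idP/imsetP.
    by rewrite -(eq_row_base S) => /submxP [u ->]; exists u.
  by move=> [u _ ->]; rewrite -(eq_row_base S) submxMl.
rewrite card_imset; first by rewrite cardsT card_mx mul1n.
exact: row_free_inj (row_base_free S).
Qed.

Lemma card_subv_nz m (S : 'M[F]_(m, k)) :
  #|[set v : 'rV[F]_k | (v != 0%R) && (v <= S)%MS]| = (q ^ \rank S - 1)%N.
Proof.
rewrite -card_subv [in RHS](cardsD1 0%R) inE sub0mx add1n subn1 /=; apply: eq_card => v; by rewrite !inE.
Qed.

Lemma pt_of_vec (v : 'rV[F]_k) : v != 0%R -> is_point <<v>>%MS.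
Proof. by move=> nz; rewrite /is_point mxrank_gen rank_rV nz genmx_id !eqxx. Qed.

Definition ptv (v : 'rV[F]_k) (nz : v != 0%R) : pt := exist (fun A => is_point A) <<v>>%MS (pt_of_vec nz).

Lemma pt_rank (P : pt) : \rank (val P) = 1%N.
Proof. by case: P => A /= /andP [/eqP -> _]. Qed.

Lemma pt_gen (P : pt) : <<val P>>%MS = val P.
Proof. by case: P => A /= /andP [_ /eqP ->]. Qed.

Lemma sub_pt (v : 'rV[F]_k) (nz : v != 0%R) (P : pt) :
  (v <= val P)%MS = (P == ptv nz).
Proof.
apply/idP/eqP => [vP|->]; last by rewrite /= genmxE.
apply: val_inj => /=; rewrite -pt_gen; apply: eq_genmx; apply/eqmxP.
have := mxrank_leqif_eq vP; rewrite pt_rank rank_rV nz => H.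
have E : (v == val P)%MS by case: H => _ <-.
by apply/eqmxP; apply: eqmx_sym; apply/eqmxP.
Qed.

Lemma ptv_sub (v : 'rV[F]_k) (nz : v != 0%R) m (S : 'M[F]_(m, k)) :
  (val (ptv nz) <= S)%MS = (v <= S)%MS.
Proof. by rewrite /= genmxE. Qed.

Lemma sum_pt_vec (v : 'rV[F]_k) (nz : v != 0%R) m (S : 'M[F]_(m, k)) :
  (\sum_(P : pt) ((val P <= S)%MS && (v <= val P)%MS) = (v <= S)%MS)%N.
Proof.
rewrite (bigD1 (ptv nz)) //= big1 ?addn0; first by rewrite !genmxE submx_refl andbT.
by move=> P neq; rewrite sub_pt (negbTE neq) andbF.
Qed.

Lemma card_vec_pt (P : pt) :
  #|[set v : 'rV[F]_k | (v != 0%R) && (v <= val P)%MS]| = (q - 1)%N.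
Proof. by rewrite card_subv_nz pt_rank expn1. Qed.

Lemma card_sum (T : finType) (p : pred T) :
  #|[set x | p x]| = (\sum_x (p x : nat))%N.
Proof.
by rewrite -sum1_card big_mkcond /=; apply: eq_bigr => x _; rewrite inE; case: (p x).
Qed.

Lemma pts_card m (S : 'M[F]_(m, k)) :
  (#|[set P : pt | (val P <= S)%MS]| * (q - 1) = q ^ \rank S - 1)%N.
Proof.
rewrite -card_subv_nz !card_sum big_distrl /=.
transitivity (\sum_(P : pt) \sum_(v : 'rV[F]_k) ((val P <= S)%MS && ((v != 0%R) && (v <= val P)%MS)))%N.
  apply: eq_bigr => P _.
  case: (val P <= S)%MS; last by rewrite mul0n big1.
  by rewrite mul1n -(card_vec_pt P) card_sum.
rewrite exchange_big /=; apply: eq_bigr => v _.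
case: (eqVneq v 0%R) => [->|nz] /=.
  by rewrite big1 // => P _; rewrite andbF.
rewrite -(sum_pt_vec nz S); apply: eq_bigr => P _.
by case: (_ <= _)%MS; case: (_ <= _)%MS.
Qed.

Lemma pts_vq m (S : 'M[F]_(m, k)) :
  #|[set P : pt | (val P <= S)%MS]| = vq q (\rank S).
Proof.
by rewrite /vq -pts_card mulnK // subn_gt0 q_gt1.
Qed.

End Geo.

Import GRing.Theory.

Section Geo2.
Variable F : finFieldType.
Variable k : nat.
Local Notation q := #|F|.
Local Notation pt := (point F k).

Lemma eq_pt (v : 'rV[F]_k) (P : pt) : v != 0%R -> (v == val P)%MS = (v <= val P)%MS.
Proof.
move=> nz; apply/idP/idP => [/andP [] //|H].
rewrite H /=; move: H; rewrite (sub_pt nz) => /eqP ->; by rewrite /= genmxE.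
Qed.

Lemma exists_sub_rank m (A : 'M[F]_(m, k)) t : (t <= \rank A)%N ->
  exists T : 'M[F]_k, (T <= A)%MS /\ \rank T = t.
Proof.
move=> tA; exists (pid_mx t *m row_base A)%R; split.
  by rewrite -(eq_row_base A) submxMl.
rewrite mxrankMfree ?row_base_free // rank_pid_mx //.
by apply: leq_trans tA (rank_leq_col A).
Qed.

Lemma rank_addpt (V : 'M[F]_k) (P : pt) : ~~ (val P <= V)%MS ->
  \rank (V + val P)%MS = (\rank V).+1.
Proof.
move=> nPV; have := mxrank_sum_cap V (val P); rewrite pt_rank.
have : \rank (V :&: val P)%MS = 0%N.
  have := mxrank_leqif_sup (capmxSr V (val P)); rewrite pt_rank => H.
  have : (\rank (V :&: val P) <= 1)%N by case: H.
  case: (\rank (V :&: val P)%MS) H => [//|[|//]] H _.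
  by case: H => _; rewrite eqxx => /esym; rewrite sub_capmx submx_refl andbT (negbTE nPV).
move=> ->; rewrite addn0 addn1 => <-; by [].
Qed.

Lemma exch_pt (V : 'M[F]_k) (P P' : pt) : ~~ (val P <= V)%MS -> ~~ (val P' <= V)%MS ->
  (val P' <= V + val P)%MS -> (val P <= V + val P')%MS.
Proof.
move=> nP nP' H.
have S : (V + val P' <= V + val P)%MS by rewrite addsmx_sub addsmxSl H.
have := mxrank_leqif_sup S; rewrite !rank_addpt // => E.
have : (V + val P <= V + val P')%MS by case: E => _ <-.
by rewrite addsmx_sub => /andP [].
Qed.

Definition multD (M : pt -> nat) (X V : 'M[F]_k) :=
  (\sum_(P : pt | (val P <= X)%MS && ~~ (val P <= V)%MS) M P)%N.

Lemma mult_split (M : pt -> nat) (X V : 'M[F]_k) : (V <= X)%MS ->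
  mult M X = (mult M V + multD M X V)%N.
Proof.
move=> VX; rewrite /mult /multD (bigID (fun P : pt => (val P <= V)%MS)) /=; congr (_ + _)%N.
apply: eq_bigl => P; apply/idP/idP => [/andP [] //|H]; rewrite H andbT.
exact: submx_trans H VX.
Qed.

Lemma mult_mono (M : pt -> nat) (X V : 'M[F]_k) : (V <= X)%MS -> (mult M V <= mult M X)%N.
Proof. by move=> VX; rewrite (mult_split M VX) leq_addr. Qed.

Lemma card_diff (X V : 'M[F]_k) : (V <= X)%MS ->
  #|[set P : pt | (val P <= X)%MS && ~~ (val P <= V)%MS]| =
  (vq q (\rank X) - vq q (\rank V))%N.
Proof.
move=> VX; rewrite -!pts_vq.
rewrite -(cardsID [set P : pt | (val P <= V)%MS] [set P : pt | (val P <= X)%MS]).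
have -> : ([set P : pt | (val P <= X)%MS] :&: [set P : pt | (val P <= V)%MS]) = [set P : pt | (val P <= V)%MS].
  apply/setP => P; rewrite !inE; apply/andP/idP => [[] //|H]; split => //.
  exact: submx_trans H VX.
rewrite addKn; apply: eq_card => P; rewrite !inE; by rewrite andbC.
Qed.

End Geo2.

Import GRing.Theory.

Section Geo3.
Variable F : finFieldType.
Variable k : nat.
Local Notation q := #|F|.
Local Notation pt := (point F k).

Lemma residual (M : pt -> nat) (U V : 'M[F]_k) a t w :
  (V <= U)%MS -> \rank V = a -> \rank U = (a + t).+1 ->
  (forall T : 'M[F]_k, (T <= U)%MS -> \rank T = a.+1 -> (mult M T <= w)%N) ->
  (mult M U + Vs q t.+1 * mult M V <= Vs q t.+1 * w + mult M V)%N.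
Proof.
move=> VU rV rU Hw.
have q1 := q_gt1 F.
pose A := [pred P : pt | (val P <= U)%MS && ~~ (val P <= V)%MS].
have cardA : #|[set P | A P]| = (q ^ a * Vs q t.+1)%N.
  rewrite (card_diff VU) rU rV !vqE // -addnS VsD; lia.
have S1 : (\sum_(P | A P) multD M (V + val P)%MS V = q ^ a * multD M U V)%N.
  rewrite /multD.
  transitivity (\sum_(P : pt) \sum_(P' : pt)
     ((A P && (val P' <= V + val P)%MS && ~~ (val P' <= V)%MS) * M P'))%N.
    rewrite big_mkcond; apply: eq_bigr => P _.
    case: (A P) => /=; last by rewrite big1.
    rewrite big_mkcond; apply: eq_bigr => P' _.
    by case: (_ && _); rewrite ?mul1n ?mul0n.
  rewrite exchange_big big_distrr [RHS]big_mkcond /=; apply: eq_bigr => P' _.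
  rewrite -big_distrl /=.
  case: (boolP (val P' <= V)%MS) => HP'V.
    by rewrite andbF /= big1 ?mul0n // => P _; rewrite andbF.
  rewrite andbT; case: (boolP (val P' <= U)%MS) => HP'U; last first.
    rewrite big1 ?mul0n // => P _; rewrite andbT.
    case: (boolP (_ && _)) => // /andP [/andP [PU _] H]; move/negP: HP'U; case.
    by apply: submx_trans H _; rewrite addsmx_sub VU.
  rewrite /=; congr (_ * _)%N.
  have VVP : (V <= V + val P')%MS by apply: addsmxSl.
  have := card_diff VVP; rewrite rank_addpt // rV !vqE // VsS addKn => <-.
  rewrite card_sum; apply: eq_bigr => P _; rewrite andbT /=.
  case: (boolP (val P <= V)%MS) => HPV; first by rewrite !andbF.
  congr (nat_of_bool _); rewrite /= !andbT; apply/idP/idP => [/andP [_ H]|H].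
    exact: exch_pt H.
  rewrite (exch_pt HP'V HPV H) andbT.
  by apply: submx_trans H _; rewrite addsmx_sub VU.
have each : forall P, A P -> (multD M (V + val P)%MS V <= w - mult M V)%N.
  move=> P /andP [PU PV].
  have VVP : (V <= V + val P)%MS by apply: addsmxSl.
  have := Hw (V + val P)%MS; rewrite addsmx_sub VU PU rank_addpt // rV => /(_ isT erefl).
  rewrite (mult_split M VVP); lia.
have S2 : (q ^ a * multD M U V <= q ^ a * Vs q t.+1 * (w - mult M V))%N.
  rewrite -S1 -cardA; apply: (@leq_trans (\sum_(P | A P) (w - mult M V))%N); first by apply: leq_sum.
  rewrite (eq_bigl (fun P => P \in A)) // sum_nat_const; apply: eq_leq; congr (_ * _)%N; apply: eq_card => P; by rewrite !inE.
have qa : (0 < q ^ a)%N by rewrite expn_gt0 ltnW.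
rewrite -mulnA leq_pmul2l // in S2.
have Vw : (mult M V <= w)%N.
  have : (0 < #|[set P | A P]|)%N by rewrite cardA muln_gt0 qa Vs_pos // ltnW.
  case/card_gt0P => P; rewrite inE => /andP [PU PV].
  have VVP : (V <= V + val P)%MS by apply: addsmxSl.
  apply: leq_trans (mult_mono M VVP) _; apply: Hw; first by rewrite addsmx_sub VU.
  by rewrite rank_addpt // rV.
rewrite (mult_split M VU).
move: S2; rewrite mulnBr; set x := (Vs q t.+1 * w)%N; set y := (Vs q t.+1 * mult M V)%N.
have : (y <= x)%N by rewrite leq_mul2l Vw orbT.
lia.
Qed.

End Geo3.

Import GRing.Theory.

Lemma griesmer_mono q t s d d' : (d <= d')%N -> (griesmer_r q t s d <= griesmer_r q t s d')%N.
Proof.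
move=> dd; rewrite /griesmer_r leq_add //.
by apply: leq_sum => i _; apply: ceil_mono.
Qed.

Lemma Vs1 q : Vs q 1 = 1%N.
Proof. by rewrite /Vs big_ord1. Qed.

Section Geo4.
Variable F : finFieldType.
Variable k : nat.
Local Notation q := #|F|.
Local Notation pt := (point F k).

Lemma griesmer_arc (M : pt -> nat) s : forall t (U : 'M[F]_k) w,
  (1 <= t)%N -> (t <= s)%N -> \rank U = s ->
  (forall T : 'M[F]_k, (T <= U)%MS -> \rank T = (s - t)%N -> (mult M T <= w)%N) ->
  (griesmer_r q t s (mult M U - w) <= mult M U)%N.
Proof.
have q1 := q_gt1 F.
elim/ltn_ind: s => s IH t U w t1 ts rU Hw.
set n := mult M U.
case: (ltngtP t s) ts => // [ts _|<- _]; last first.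
  by rewrite /griesmer_r subnn big_geq // addn0 leq_subr.
have [u hu] : exists u, (s - t = u.+1)%N by exists (s - t).-1; rewrite prednK // subn_gt0.
pose P := fun T : 'M[F]_k => (T <= U)%MS && (\rank T == (s - t)%N).
have [T0 T0P] : exists T0, P T0.
  have := @exists_sub_rank F k k U (s - t); rewrite rU leq_subr => /(_ isT) [T [TU rT]].
  by exists T; rewrite /P TU rT eqxx.
have Pc : (0 < #|P|)%N by apply/card_gt0P; exists T0.
have [T1 T1P eqW] := eq_bigmax_cond (fun T => mult M T) Pc.
move: T1P; rewrite unfold_in => /andP [T1U /eqP rT1].
set W := (\max_(T in P) mult M T)%N in eqW *.
have HW : forall T : 'M[F]_k, (T <= U)%MS -> \rank T = (s - t)%N -> (mult M T <= W)%N.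
  by move=> T TU rT; apply: (@leq_bigmax_cond _ P); rewrite /P TU rT eqxx.
have Ww : (W <= w)%N.
  by apply/bigmax_leqP => T; rewrite unfold_in => /andP [TU /eqP rT]; apply: Hw.
have Wn : (W <= n)%N by rewrite eqW; apply: mult_mono.
set c := (q * Vs q t)%N.
have c0 : (0 < c)%N by rewrite muln_gt0 Vs_pos // ltnW.
have Vt1 : Vs q t.+1 = (c + 1)%N by rewrite -add1n VsD Vs1 expn1 addnC.
have res : forall V : 'M[F]_k, (V <= T1)%MS -> \rank V = u ->
    (n + c * mult M V <= (c + 1) * W)%N.
  move=> V VT rV.
  have VU : (V <= U)%MS by apply: submx_trans VT T1U.
  have := @residual F k M U V u t W VU rV.
  rewrite rU -hu => /(_ _ HW).
  have -> : (u + t).+1 = s by lia.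
  move=> /(_ erefl); rewrite Vt1 mulnDl mul1n; lia.
have := @exists_sub_rank F k k T1 u; rewrite rT1 hu => /(_ (leqnSn u)) [V0 [V0T rV0]].
have nW : (n <= (c + 1) * W)%N by apply: leq_trans (res _ V0T rV0); apply: leq_addr.
set D := (n - W)%N.
set E := ceil_div D c.
have EW : (E <= W)%N by rewrite ceil_leP //; move: nW; rewrite /D mulnDl mul1n; lia.
have HV : forall V : 'M[F]_k, (V <= T1)%MS -> \rank V = (s - t - 1)%N -> (mult M V <= W - E)%N.
  move=> V VT rV; rewrite hu subn1 /= in rV.
  have mVW : (mult M V <= W)%N.
    by apply: leq_trans (mult_mono M VT) _; rewrite eqW.
  have : (E <= W - mult M V)%N.
    rewrite ceil_leP //; have := res V VT rV; rewrite /D mulnDl mul1n mulnBl.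
    have : (mult M V * c <= W * c)%N by rewrite leq_mul2r mVW orbT.
    rewrite (mulnC c); lia.
  lia.
have := IH (s - t)%N _ 1%N T1 (W - E)%N (leqnn 1) _ rT1 HV.
rewrite -eqW subKn // => G1.
have G1p : (griesmer_r q 1 (s - t) E <= W)%N by apply: G1; lia.
apply: leq_trans (griesmer_mono _ _ _ (_ : n - w <= D)%N) _.
  by rewrite /D leq_sub2l.
rewrite -(subnK Wn) -/D /griesmer_r leq_add2l.
apply: (leq_trans _ G1p); rewrite /griesmer_r subn1 !(vqE _ q1) Vs1 hu.
have -> : u.+1.-1.+1 = u.+1 by [].
rewrite big_nat_recl; last by [].
rewrite expn1 -/c -/E leq_add2l; apply: eq_leq.
apply: eq_bigr => i _; rewrite muln1 /E ceil_nested; try exact: c0; try (by rewrite expn_gt0 (ltnW q1)).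
congr (ceil_div D _); rewrite /c expnS mulnAC; reflexivity.
Qed.

End Geo4.

Import GRing.Theory.

Section Code.
Variable F : finFieldType.
Variable k : nat.
Local Open Scope ring_scope.
Local Notation q := #|F|.
Local Notation pt := (point F k).

Lemma col_count (K : pt -> nat) N (G : 'M[F]_(k, N)) : assoc_gen_matrix K G ->
  forall T : 'M[F]_k, #|[set j : 'I_N | ((col j G)^T <= T)%MS]| = mult K T.
Proof.
move=> [nz cnt] T; rewrite /mult.
transitivity (\sum_(P : pt | (val P <= T)%MS) #|[set j : 'I_N | ((col j G)^T == val P)%MS]|)%N;
  last by apply: eq_bigr => P _; rewrite cnt.
rewrite card_sum; symmetry; rewrite big_mkcond /=.
transitivity (\sum_(P : pt) \sum_(j : 'I_N) ((val P <= T)%MS && ((col j G)^T <= val P)%MS))%N.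
  apply: eq_bigr => P _; case: (val P <= T)%MS; last by rewrite big1.
  rewrite card_sum; apply: eq_bigr => j _; rewrite eq_pt //.
  by rewrite trmx_eq0 nz.
rewrite exchange_big /=; apply: eq_bigr => j _.
have nzj : ((col j G)^T != 0)%R by rewrite trmx_eq0 nz.
by rewrite -(sum_pt_vec nzj T).
Qed.

Lemma support_col N (D : 'M[F]_N) j : (j \in Defs.support D) = (col j D != 0%R).
Proof.
rewrite inE; apply/existsP/idP.
  case=> v /andP [/submxP [u ->] vj]; apply/negP => /eqP cz; move/negP: vj; apply.
  rewrite !mxE; apply/eqP; apply: big1 => l _.
  have : col j D l 0 = 0%R by rewrite cz mxE.
  by rewrite mxE => ->; rewrite mulr0.
move=> cnz.
have [i Hi] : exists i, D i j != 0%R.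
  apply/existsP; apply: contraR cnz; rewrite negb_exists => /forallP H.
  apply/eqP/matrixP => a b; rewrite !mxE; move: (H a); by rewrite negbK => /eqP.
exists (row i D); rewrite row_sub /=; by rewrite mxE.
Qed.

Lemma col_sub0 m n N (A : 'M[F]_(m, N)) (B : 'M[F]_(n, N)) j : (A <= B)%MS ->
  col j B = 0%R -> col j A = 0%R.
Proof. by case/submxP => X ->; rewrite !colE -mulmxA -colE => ->; rewrite mulmx0. Qed.

Lemma ghw_le_N N (G : 'M[F]_(k, N)) r : (ghw G r <= N)%N.
Proof.
rewrite /ghw; elim/big_ind: _ => //; first by move=> x y Hx _; rewrite geq_min Hx.
by move=> D _; rewrite -[X in (_ <= X)%N](card_ord N) max_card.
Qed.

Lemma bigmin_le (I : eqType) (s : seq I) (P : pred I) (f : I -> nat) N j :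
  j \in s -> P j -> (\big[minn/N]_(i <- s | P i) f i <= f j)%N.
Proof.
elim: s => //= a s IH; rewrite inE big_cons; case/orP => [/eqP ->|js] Pj.
  by rewrite Pj geq_minl.
case: (P a); last exact: IH.
by rewrite geq_min IH ?orbT.
Qed.

Lemma ghw_eq N (G : 'M[F]_(k, N)) r x :
  (forall D : 'M[F]_N, (D <= G)%MS -> \rank D = r -> (x <= #|Defs.support D|)%N) ->
  (x <= N)%N ->
  (exists2 D : 'M[F]_N, (D <= G)%MS && (\rank D == r) & #|Defs.support D| = x) ->
  ghw G r = x.
Proof.
move=> Hlow xN [D0 HD0 sD0]; apply/eqP; rewrite eqn_leq; apply/andP; split.
  by rewrite /ghw -sD0; apply: bigmin_le => //; rewrite mem_index_enum.
rewrite /ghw; elim/big_ind: _ => //; first by move=> a b; rewrite leq_min => ->.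
by move=> D /andP [DG /eqP rD]; apply: Hlow.
Qed.

Lemma nonsupp_card N (D : 'M[F]_N) :
  #|Defs.support D| = (N - #|[set j : 'I_N | col j D == 0%R]|)%N.
Proof.
have E := cardsC (Defs.support D); rewrite card_ord in E.
have E2 : #|~: Defs.support D| = #|[set j : 'I_N | col j D == 0%R]|.
  by apply: eq_card => j; rewrite in_setC support_col negbK inE.
lia.
Qed.

Lemma ghw_lower (K : pt -> nat) N (G : 'M[F]_(k, N)) r w :
  assoc_gen_matrix K G -> (r <= k)%N ->
  (forall T : 'M[F]_k, \rank T = (k - r)%N -> (mult K T <= w)%N) ->
  forall D : 'M[F]_N, (D <= G)%MS -> \rank D = r -> (N - w <= #|Defs.support D|)%N.
Proof.
move=> ag rk Hw D /submxP [M defD] rD.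
have rM : (r <= \rank M)%N by rewrite -rD defD mxrankM_maxl.
have [T0 [T0M rT0]] := exists_sub_rank rM.
set Z := kermx T0^T.
have rZ : \rank Z = (k - r)%N by rewrite mxrank_ker mxrank_tr rT0.
rewrite nonsupp_card; apply: leq_sub2l.
apply: leq_trans (Hw Z rZ); rewrite -(col_count ag Z).
apply: subset_leq_card; apply/subsetP => j; rewrite !inE => /eqP cz.
rewrite sub_kermx -trmx_mul trmx_eq0.
move/submxP: T0M => [X ->]; rewrite !colE -!mulmxA (mulmxA M) -colE -defD cz.
by rewrite mulmx0.
Qed.

Lemma ghw_upper (K : pt -> nat) N (G : 'M[F]_(k, N)) r (T0 : 'M[F]_k) :
  assoc_gen_matrix K G -> (r <= k)%N -> row_free G -> \rank T0 = (k - r)%N ->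
  exists2 D : 'M[F]_N, (D <= G)%MS && (\rank D == r) & #|Defs.support D| = (N - mult K T0)%N.
Proof.
move=> ag rk rfG rT0.
set Y := (cokermx T0)^T.
exists <<(Y *m G)>>%MS.
  rewrite genmxE submxMl mxrank_gen mxrankMfree // mxrank_tr mxrank_coker rT0.
  by rewrite subKn // eqxx.
rewrite nonsupp_card -(col_count ag T0); congr (_ - _)%N.
apply: eq_card => j; rewrite !inE.
apply/idP/idP => [/eqP cz|H].
  have cz' : col j (Y *m G) = 0%R by apply: col_sub0 cz; rewrite genmxE.
  rewrite submxE -trmx_eq0 trmx_mul trmxK; apply/eqP.
  by rewrite colE mulmxA -colE cz'.
apply/eqP; apply: (@col_sub0 _ _ _ _ (Y *m G)%R); first by rewrite genmxE.
move: H; rewrite submxE -trmx_eq0 trmx_mul trmxK => /eqP H.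
by rewrite colE -mulmxA -colE.
Qed.

Lemma nondeg_hyp N (G : 'M[F]_(k, N)) : ~~ row_free G ->
  exists2 H : 'M[F]_k, \rank H = k.-1 & forall j, ((col j G)^T <= H)%MS.
Proof.
move=> nrf.
have rG : (\rank G < k)%N by rewrite ltn_neqAle rank_leq_row andbT.
have rK : (1 <= \rank (kermx G))%N by rewrite mxrank_ker subn_gt0.
have [T1 [T1K rT1]] := exists_sub_rank rK.
exists (kermx T1^T); first by rewrite mxrank_ker mxrank_tr rT1 subn1.
move=> j; rewrite sub_kermx -trmx_mul trmx_eq0.
move: T1K; rewrite sub_kermx => /eqP T1G.
by rewrite colE mulmxA T1G mul0mx.
Qed.

End Code.

Lemma sum_const_pred (I : finType) (p : pred I) c :
  (\sum_(i | p i) c = #|[set i | p i]| * c)%N.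
Proof.
rewrite card_sum big_distrl /= big_mkcond /=; apply: eq_bigr => i _.
by case: (p i); rewrite ?mul1n ?mul0n.
Qed.

Lemma mult_total (F : finFieldType) k (M : point F k -> nat) : Defs.total M = mult M 1%:M%R.
Proof. by rewrite /Defs.total /mult; apply: eq_bigl => P; rewrite submx1. Qed.

Lemma multK (F : finFieldType) k (FF : point F k -> nat) sigma :
  (forall P, FF P <= sigma)%N -> forall S : 'M[F]_k,
  mult (fun P => sigma - FF P)%N S = (sigma * vq #|F| (\rank S) - mult FF S)%N.
Proof.
move=> hs S; rewrite /mult sumnB; last by move=> P _; apply: hs.
by rewrite sum_const_pred pts_vq mulnC.
Qed.

Unset Implicit Arguments.

Theorem mainTheorem1 (F : finFieldType) (q k r : nat) (eps : nat -> nat)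
    (FF : point F k -> nat) (sigma : nat) :
  #|F| = q ->
  (2 <= k)%N -> (1 <= r)%N -> (r <= k - 1)%N ->
  (forall i, (r <= i)%N -> (i <= k - 2)%N -> (eps i <= q - 1)%N) ->
  minihyper_params FF (\sum_(r <= i < k - 1) eps i * vq q i.+1)%N
                      (\sum_(r <= i < k - 1) eps i * vq q (i.+1 - r))%N
                      (k - 1 - r) ->
  (\max_(P : point F k) FF P <= sigma)%N ->
  let K := fun P : point F k => (sigma - FF P)%N in
  arc_params K (sigma * vq q k - \sum_(r <= i < k - 1) eps i * vq q i.+1)%N
               (sigma * vq q (k - r) - \sum_(r <= i < k - 1) eps i * vq q (i.+1 - r))%N
               (k - 1 - r)
  /\ (forall (N : nat) (G : 'M[F]_(k, N)),
        assoc_gen_matrix K G -> N = griesmer_r q r k (ghw G r)).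
Proof.
move=> hq k2 r1 rk heps [totFF minFF [S0 rS0 mS0]] hmax K.
have q2 : (1 < q)%N by rewrite -hq; exact: q_gt1.
set m := (k - r)%N.
have m1 : (1 <= m)%N by rewrite /m; lia.
have km : k = (m + r)%N by rewrite /m; lia.
pose e := fun j => if j is j'.+1 then eps (j' + r) else 0%N.
have e0 : e 0%N = 0%N by [].
have eb : forall i, (i < m)%N -> (e i <= q - 1)%N.
  by case=> [//|i] /= H; apply: heps; rewrite /m in H; lia.
have HA : (\sum_(r <= i < k - 1) eps i * vq q i.+1)%N = AA q r m e.
  rewrite /AA -(big_mkord xpredT (fun i => e i * Vs q (i + r))%N).
  have -> : m = (k - 1 - r).+1 by rewrite /m; lia.
  rewrite big_nat_recl // e0 mul0n add0n -{1}(add0n r) big_addn.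
  by apply: eq_bigr => i _; rewrite vqE // addSn.
have HB : (\sum_(r <= i < k - 1) eps i * vq q (i.+1 - r))%N = BB q m e.
  rewrite /BB -(big_mkord xpredT (fun i => e i * Vs q i)%N).
  have -> : m = (k - 1 - r).+1 by rewrite /m; lia.
  rewrite big_nat_recl // e0 mul0n add0n -{1}(add0n r) big_addn.
  by apply: eq_bigr => i _; rewrite vqE // -addSn addnK.
have Hvk : vq q k = Vs q (m + r) by rewrite -km vqE.
have Hvm : vq q (k - r) = Vs q m by rewrite vqE.
rewrite HA HB in totFF minFF mS0 *.
rewrite Hvk Hvm.
have hs : forall P, (FF P <= sigma)%N.
  by move=> P; apply: leq_trans hmax; apply: leq_bigmax.
have mK := multK hs.
have rS0' : \rank S0 = m by move/eqP: rS0; rewrite /m; lia.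
have arcb : forall T : 'M[F]_k, \rank T = m -> (mult K T <= ww q m sigma e)%N.
  move=> T rT; rewrite /K mK rT hq Hvm /ww leq_sub2l //.
  by apply: minFF; rewrite /proj_subspace rT /m; apply/eqP; lia.
have mS0K : mult K S0 = ww q m sigma e by rewrite /K mK rS0' hq Hvm mS0.
have totK : Defs.total K = nn q r m sigma e.
  by rewrite mult_total /K mK mxrank1 -mult_total totFF hq Hvk.
split.
  split => //; last by exists S0.
  by move=> S; rewrite /proj_subspace => /eqP rS; apply: arcb; rewrite rS /m; lia.
move=> N G ag.
have NK : N = Defs.total K.
  rewrite mult_total -(col_count ag) -[LHS](card_ord N).
  by apply: eq_card => j; rewrite !inE submx1.
case: (posnP sigma) => [s0|s1].
  have N0 : N = 0%N.
    rewrite NK /Defs.total big1 // => P _; rewrite /K s0 //.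
  have -> : ghw G r = 0%N by apply/eqP; rewrite -leqn0; have := ghw_le_N G r; lia.
  rewrite N0 /griesmer_r add0n big1 // => i _; apply: ceil_div0.
  by rewrite muln_gt0 expn_gt0 (ltnW q2) vqE // Vs_pos.
have nm := @ww_lt_nn q r m sigma e q2 r1 m1 s1 e0 eb.
have rf : row_free G.
  apply/negP => /negP nrf; have [H rH Hc] := nondeg_hyp nrf.
  have mH : mult K H = nn q r m sigma e.
    rewrite -totK -NK -(col_count ag) -[RHS](card_ord N).
    by apply: eq_card => j; rewrite !inE Hc.
  have r1c := r1; case: (ltngtP r 1) r1c => // [r2 _|r1' _].
    have := @griesmer_arc F k K k.-1 r.-1 H (ww q m sigma e).
    rewrite mH => /(_ _ _ rH) G1; rewrite hq in G1.
    have : (griesmer_r q r.-1 k.-1 (nn q r m sigma e - ww q m sigma e) <= nn q r m sigma e)%N.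
      apply: G1; try lia.
      move=> T _ rT; apply: arcb; rewrite rT /m; lia.
    have := @griesmer_gt q r m sigma e q2 r1 m1 s1 e0 eb r2.
    rewrite -km; lia.
  have km1 : k.-1 = m by rewrite /m r1'; lia.
  have := arcb H; rewrite rH km1 => /(_ erefl); rewrite mH; lia.
have gh : ghw G r = (N - ww q m sigma e)%N.
  apply: ghw_eq.
  - apply: (ghw_lower ag); first by lia.
    by move=> T rT; apply: arcb.
  - exact: leq_subr.
  - rewrite -mS0K; apply: (ghw_upper ag) => //; lia.
rewrite gh NK totK km; symmetry.
exact: (@griesmer_eq q r m sigma e q2 r1 m1 s1 e0 eb).
Qed.
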